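(* Let $L$ be a Skolem-free first-order language, $T$ an $L$ theory and $\Gamma$ a set of $L$ formulas. Then $\mathrm{GSI}^\omega_\Gamma(\mathit{sk}^\exists(T))$ is inconsistent if and only if $T+\mathrm{IND}(\Gamma)$ is inconsistent.
   Context: Skolem symbols $\mathfrak{s}_{Qx\varphi}$: for each formula $Qx\varphi$ ($Q\in\{\forall,\exists\}$) a new function symbol of arity $|\mathrm{FV}(Qx\varphi)|$; $L$ is Skolem-free if it contains none of the Skolem symbols obtainable (iteratively) over $L$. $\mathit{sk}^\exists$/$\mathit{sk}^\forall$: $\mathit{sk}^Q$ fixes atoms, commutes with $\wedge,\vee$, $\mathit{sk}^Q(\neg A)=\neg\mathit{sk}^{\overline Q}(A)$, $\mathit{sk}^Q(QxA(x,\vec y))=\mathit{sk}^Q(A(\mathfrak{s}_{QxA}(\vec y),\vec y))$ with $\vec y$ exactly the free variables of $QxA$, $\mathit{sk}^Q(\overline QxA)=\overline Qx\,\mathit{sk}^Q(A)$; elementwise on theories. $I_x\varphi=\forall\vec z(\varphi(0,\vec z)\wedge\forall x(\varphi(x,\vec z)\to\varphi(s(x),\vec z))\to\forall x\varphi(x,\vec z))$, $\mathrm{IND}(\Gamma)=\{I_x\gamma:\gamma\in\Gamma\}$. $\Gamma\downarrow L'=\{\gamma(\vec x,t_1,\dots,t_n):\gamma(\vec x,z_1,\dots,z_n)\in\Gamma,\ t_i$ ground $L'$ terms$\}$; $\Delta^-$ = formulas of $\Delta$ with at most one free variable; $\mathrm{GSI}_\Gamma(T)=T+\mathit{sk}^\exists(\mathrm{IND}((\Gamma\downarrow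 L(T))^-))$, $\mathrm{GSI}^\omega_\Gamma(T)=\bigcup_i\mathrm{GSI}^i_\Gamma(T)$. *)

(* Defs.v *)
From Stdlib Require List.
From mathcomp Require Import all_boot.

Set Implicit Arguments.
Unset Strict Implicit.
Unset Printing Implicit Defensive.

(* Function symbols are either base symbols [FB name arity] or
   Skolem symbols [FSk q A] = s_{Q x A}, where [q = true] means Q = exists,
   [q = false] means Q = forall, and [A] is the body of the quantified
   formula (de Bruijn: the bound variable x is index 0).
   Predicate symbols are [Pr name arity args]; equality is logical. *)
Inductive fsym : Type :=
  | FB : nat -> nat -> fsym
  | FSk : bool -> form -> fsym
with term : Type :=
  | Var : nat -> term
  | App : fsym -> list term -> term
with form : Type :=
  | Eq : term -> term -> form
  | Pr : nat -> nat -> list term -> form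
  | Neg : form -> form
  | And : form -> form -> form
  | Or : form -> form -> form
  | All : form -> form
  | Ex : form -> form.

Definition Qnt (q : bool) (A : form) : form := if q then Ex A else All A.
Definition Imp (A B : form) : form := Or (Neg A) B.

Definition zero : fsym := FB 0 0.
Definition succ : fsym := FB 1 1.
Definition Tzero : term := App zero [::].
Definition Ts (t : term) : term := App succ [:: t].

Fixpoint fv_term (t : term) : seq nat :=
  match t with
  | Var i => [:: i]
  | App _ ts =>
      (fix fvl (l : list term) : seq nat :=
         match l with [::] => [::] | u :: l' => fv_term u ++ fvl l' end) ts
  end.

Definition fv_terms (ts : list term) : seq nat := flatten (map fv_term ts).

Fixpoint fv_form (A : form) : seq nat :=
  match A with
  | Eq t u => fv_term t ++ fv_term u
  | Pr _ _ ts => fv_terms ts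
  | Neg B => fv_form B
  | And B C | Or B C => fv_form B ++ fv_form C
  | All B | Ex B => [seq i.-1 | i <- fv_form B & i != 0]
  end.

Definition fvs (A : form) : seq nat := sort leq (undup (fv_form A)).

Definition arity (f : fsym) : nat :=
  match f with
  | FB _ a => a
  | FSk q A => size (fvs (Qnt q A))
  end.

Fixpoint tsubst (s : nat -> term) (t : term) : term :=
  match t with
  | Var i => s i
  | App f ts =>
      App f ((fix tsl (l : list term) : list term :=
                match l with [::] => [::] | u :: l' => tsubst s u :: tsl l' end) ts)
  end.

Definition up (s : nat -> term) : nat -> term :=
  fun i => if i is j.+1 then tsubst (fun k => Var k.+1) (s j) else Var 0.

Fixpoint fsubst (s : nat -> term) (A : form) : form :=
  match A with
  | Eq t u => Eq (tsubst s t) (tsubst s u)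
  | Pr p a ts => Pr p a (map (tsubst s) ts)
  | Neg B => Neg (fsubst s B)
  | And B C => And (fsubst s B) (fsubst s C)
  | Or B C => Or (fsubst s B) (fsubst s C)
  | All B => All (fsubst (up s) B)
  | Ex B => Ex (fsubst (up s) B)
  end.

(* A[t/x] where x is the variable bound by a quantifier over A *)
Definition inst (A : form) (t : term) : form :=
  fsubst (fun i => if i is j.+1 then Var j else t) A.

Definition skterm (q : bool) (A : form) : term :=
  App (FSk q A) [seq Var i | i <- fvs (Qnt q A)].

Fixpoint fsize (A : form) : nat :=
  match A with
  | Eq _ _ | Pr _ _ _ => 0
  | Neg B | All B | Ex B => (fsize B).+1
  | And B C | Or B C => (fsize B + fsize C).+1
  end.

(* [skf n q A] computes sk^Q(A) (q = true: sk^exists, q = false: sk^forall)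
   given enough fuel n; substitution of terms does not change [fsize],
   so fuel [fsize A] suffices. *)
Fixpoint skf (n : nat) (q : bool) (A : form) : form :=
  match n with
  | 0 => A
  | n'.+1 =>
    match A with
    | Eq _ _ | Pr _ _ _ => A
    | Neg B => Neg (skf n' (~~ q) B)
    | And B C => And (skf n' q B) (skf n' q C)
    | Or B C => Or (skf n' q B) (skf n' q C)
    | All B => if q then All (skf n' q B) else skf n' q (inst B (skterm false B))
    | Ex B => if q then skf n' q (inst B (skterm true B)) else Ex (skf n' q B)
    end
  end.

Definition sk (q : bool) (A : form) : form := skf (fsize A) q A.

Definition skE (X : form -> Prop) : form -> Prop :=
  fun B => exists A, X A /\ B = sk true A.

Record lang := Lang { lfun : fsym -> Prop; lpred : nat -> nat -> Prop }.

Fixpoint term_over (F : fsym -> Prop) (t : term) : Prop :=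
  match t with
  | Var _ => True
  | App f ts =>
      F f /\ size ts = arity f /\
      (fix tol (l : list term) : Prop :=
         match l with [::] => True | u :: l' => term_over F u /\ tol l' end) ts
  end.

Fixpoint form_over (L : lang) (A : form) : Prop :=
  match A with
  | Eq t u => term_over (lfun L) t /\ term_over (lfun L) u
  | Pr p a ts => lpred L p a /\ size ts = a /\ (forall t, List.In t ts -> term_over (lfun L) t)
  | Neg B => form_over L B
  | And B C | Or B C => form_over L B /\ form_over L C
  | All B | Ex B => form_over L B
  end.

Fixpoint skclos (L : lang) (n : nat) : lang :=
  match n with
  | 0 => L
  | n'.+1 =>
      Lang (fun f => lfun (skclos L n') f \/
                     exists q A, f = FSk q A /\ form_over (skclos L n') (Qnt q A))
           (lpred L)
  end.

Definition obtainable_skolem (L : lang) (f : fsym) : Prop :=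
  exists n q A, f = FSk q A /\ form_over (skclos L n) (Qnt q A).

Definition skolem_free (L : lang) : Prop :=
  forall f, lfun L f -> ~ obtainable_skolem L f.

Definition sentence (A : form) : Prop := fv_form A = [::].

(* I_x phi, x = variable k: phi' is phi with x moved to index 0 *)
Definition ind_body (phi : form) (k : nat) : form :=
  let phi' := fsubst (fun i => if i == k then Var 0 else Var i.+1) phi in
  Imp (And (inst phi' Tzero)
           (All (Imp phi' (fsubst (fun i => if i is j.+1 then Var j.+1 else Ts (Var 0)) phi'))))
      (All phi').

Definition closeAll (n : nat) (A : form) : form := iter n All A.

Definition Ix (phi : form) (k : nat) : form :=
  let B := ind_body phi k in closeAll (\max_(i <- fv_form B) i.+1) B.

Definition IND (G : form -> Prop) : form -> Prop :=
  fun A => exists phi k, G phi /\ A = Ix phi k.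

Record theory := Theory { tfun : fsym -> Prop; tax : form -> Prop }.

Fixpoint occurs_term (f : fsym) (t : term) : Prop :=
  match t with
  | Var _ => False
  | App g ts =>
      g = f \/
      (fix ol (l : list term) : Prop :=
         match l with [::] => False | u :: l' => occurs_term f u \/ ol l' end) ts
  end.

Fixpoint occurs_form (f : fsym) (A : form) : Prop :=
  match A with
  | Eq t u => occurs_term f t \/ occurs_term f u
  | Pr _ _ ts => exists t, List.In t ts /\ occurs_term f t
  | Neg B => occurs_form f B
  | And B C | Or B C => occurs_form f B \/ occurs_form f C
  | All B | Ex B => occurs_form f B
  end.

Definition extend (T : theory) (X : form -> Prop) : theory :=
  Theory (fun f => tfun T f \/ exists A, X A /\ occurs_form f A)
         (fun A => tax T A \/ X A).

Definition ground_over (F : fsym -> Prop) (t : term) : Prop :=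
  fv_term t = [::] /\ term_over F t.

Definition down (G : form -> Prop) (F : fsym -> Prop) : form -> Prop :=
  fun A => exists g (s : nat -> term),
    G g /\ (forall i, s i = Var i \/ ground_over F (s i)) /\ A = fsubst s g.

Definition minus (D : form -> Prop) : form -> Prop :=
  fun A => D A /\ size (undup (fv_form A)) <= 1.

Definition GSI (G : form -> Prop) (T : theory) : theory :=
  extend T (skE (IND (minus (down G (tfun T))))).

Definition GSIn (G : form -> Prop) (n : nat) (T : theory) : theory := iter n (GSI G) T.

Definition GSIomega (G : form -> Prop) (T : theory) : form -> Prop :=
  fun A => exists n, tax (GSIn G n T) A.

Definition skT (L : lang) (T : form -> Prop) : theory :=
  extend (Theory (lfun L) (fun _ => False)) (skE T).

Record structure := Structure {
  dom : Type;
  inhab : dom;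
  ifun : fsym -> seq dom -> dom;
  ipred : nat -> nat -> seq dom -> Prop }.

Fixpoint eval (M : structure) (rho : nat -> dom M) (t : term) : dom M :=
  match t with
  | Var i => rho i
  | App f ts =>
      @ifun M f ((fix el (l : list term) : seq (dom M) :=
                   match l with [::] => [::] | u :: l' => eval rho u :: el l' end) ts)
  end.

Definition scons (M : structure) (d : dom M) (rho : nat -> dom M) : nat -> dom M :=
  fun i => if i is j.+1 then rho j else d.

Fixpoint sat (M : structure) (rho : nat -> dom M) (A : form) : Prop :=
  match A with
  | Eq t u => eval rho t = eval rho u
  | Pr p a ts => @ipred M p a (map (eval rho) ts)
  | Neg B => ~ sat rho B
  | And B C => sat rho B /\ sat rho C
  | Or B C => sat rho B \/ sat rho C
  | All B => forall d, sat (scons d rho) B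
  | Ex B => exists d, sat (scons d rho) B
  end.

Definition consistent (X : form -> Prop) : Prop :=
  exists M : structure, forall A, X A -> forall rho : nat -> dom M, sat rho A.

Definition inconsistent (X : form -> Prop) : Prop := ~ consistent X.

(* Main.v *)
Require Import Defs.
From mathcomp Require Import all_boot zify.
From Stdlib Require Import ClassicalEpsilon ProofIrrelevance Classical.
From Stdlib Require List.
Set Implicit Arguments.
Unset Strict Implicit.
Unset Printing Implicit Defensive.

Section TI.
Variables (P : term -> Prop) (HV : forall i, P (Var i))
  (HA : forall f ts, (forall u, List.In u ts -> P u) -> P (App f ts)).
Fixpoint term_ind' (t : term) : P t :=
  match t with
  | Var i => HV i
  | App f ts => HA f
      ((fix go (l : list term) : forall u, List.In u l -> P u :=
         match l with
         | nil => fun u (H : List.In u nil) => False_ind _ H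
         | cons v l' => fun u H => match H with
             | or_introl e => eq_ind v P (term_ind' v) u e
             | or_intror H' => go l' u H' end
         end) ts)
  end.
End TI.

Lemma map_ext_In A B (f g : A -> B) (l : seq A) :
  (forall a, List.In a l -> f a = g a) -> map f l = map g l.
Proof. elim: l => //= a l IH H; rewrite H ?IH //; [move=> b Hb; apply: H|]; tauto. Qed.

Lemma eval_App (M : structure) (rho : nat -> dom M) f ts : eval rho (App f ts) = @ifun M f (map (eval rho) ts).
Proof. by rewrite /=; congr ifun; elim: ts => //= u l ->. Qed.

Lemma tsubst_App s f ts : tsubst s (App f ts) = App f (map (tsubst s) ts).
Proof. by rewrite /=; congr App; elim: ts => //= u l ->. Qed.

Lemma fv_App f ts : fv_term (App f ts) = fv_terms ts.
Proof. by rewrite /= /fv_terms; elim: ts => //= u l ->. Qed.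

Lemma mem_fv_terms i ts : i \in fv_terms ts <-> exists u, List.In u ts /\ i \in fv_term u.
Proof.
rewrite /fv_terms; elim: ts => [|u l IH] /=; first by split=> // [[u []]].
rewrite mem_cat; split.
  case/orP=> [H|/IH [v [Hv Hi]]]; [exists u|exists v]; tauto.
case=> v [[<-|Hv] Hi]; apply/orP; [by left| right; apply/IH; by exists v].
Qed.

Lemma term_over_App F f ts : term_over F (App f ts) <->
  F f /\ size ts = arity f /\ (forall u, List.In u ts -> term_over F u).
Proof.
rewrite /=; split=> -[Hf [Hs H]]; do 2 (split=> //); move: H {Hs}; elim: ts => /=.
- by move=> _ u [].
- by move=> u l IH [Hu Hl] v [<-|Hv] //; apply: IH.
- by [].
- by move=> u l IH H; split; [apply: H; left | apply: IH => v Hv; apply: H; right].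
Qed.

Lemma occurs_App f g ts : occurs_term f (App g ts) <->
  g = f \/ exists u, List.In u ts /\ occurs_term f u.
Proof.
rewrite /=; split=> -[H|H]; try tauto; right; move: H; elim: ts => //=.
  by move=> u l IH [H|/IH [v [Hv Ho]]]; [exists u | exists v]; tauto.
  by case=> ? [[]].
by move=> u l IH [v [[<-|Hv] Ho]]; [left | right; apply: IH; exists v].
Qed.

Lemma eval_coinc (M : structure) t (rho rho' : nat -> dom M) :
  (forall i, i \in fv_term t -> rho i = rho' i) -> eval rho t = eval rho' t.
Proof.
elim/term_ind': t rho rho' => [i|f ts IH] rho rho' H.
  by apply: H; rewrite inE.
rewrite !eval_App; congr ifun; apply: map_ext_In => u Hu; apply: IH => // i Hi.
by apply: H; rewrite fv_App; apply/mem_fv_terms; exists u.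
Qed.

Lemma sat_coinc (M : structure) A (rho rho' : nat -> dom M) :
  (forall i, i \in fv_form A -> rho i = rho' i) -> (sat rho A <-> sat rho' A).
Proof.
elim: A rho rho' => /= [t u|p a ts|B IH|B IHB C IHC|B IHB C IHC|B IH|B IH] rho rho' H.
- rewrite (@eval_coinc M t rho rho') ?(@eval_coinc M u rho rho') //.
    by move=> i Hi; apply: H; rewrite mem_cat Hi orbT.
  by move=> i Hi; apply: H; rewrite mem_cat Hi.
- rewrite (@map_ext_In _ _ (eval rho) (eval rho')) // => u Hu.
  apply: eval_coinc => i Hi; apply: H; apply/mem_fv_terms; by exists u.
- by rewrite (IH rho rho').
- have H1 := IHB rho rho'; have H2 := IHC rho rho'.
  rewrite H1 ?H2 // => i Hi; apply: H; rewrite mem_cat Hi ?orbT //.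
- have H1 := IHB rho rho'; have H2 := IHC rho rho'.
  rewrite H1 ?H2 // => i Hi; apply: H; rewrite mem_cat Hi ?orbT //.
- have E : forall d, sat (scons d rho) B <-> sat (scons d rho') B.
    move=> d; apply: IH; case=> //= j Hj; apply: H; apply/mapP; exists j.+1 => //.
    by rewrite mem_filter.
  by split=> Hd d; apply/E.
- have E : forall d, sat (scons d rho) B <-> sat (scons d rho') B.
    move=> d; apply: IH; case=> //= j Hj; apply: H; apply/mapP; exists j.+1 => //.
    by rewrite mem_filter.
  by split=> -[d Hd]; exists d; apply/E.
Qed.

Lemma sat_ext (M : structure) A (rho rho' : nat -> dom M) :
  (forall i, rho i = rho' i) -> (sat rho A <-> sat rho' A).
Proof. by move=> H; apply: sat_coinc. Qed.

Lemma eval_tsubst (M : structure) (rho : nat -> dom M) s t :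
  eval rho (tsubst s t) = eval (fun i => eval rho (s i)) t.
Proof.
elim/term_ind': t => [i|f ts IH] //.
rewrite tsubst_App !eval_App -map_comp; congr ifun; apply: map_ext_In => u Hu /=.
exact: IH.
Qed.

Lemma sat_fsubst (M : structure) A s (rho : nat -> dom M) :
  sat rho (fsubst s A) <-> sat (fun i => eval rho (s i)) A.
Proof.
elim: A s rho => /= [t u|p a ts|B IH|B IHB C IHC|B IHB C IHC|B IH|B IH] s rho.
- by rewrite !eval_tsubst.
- by rewrite -map_comp (@map_ext_In _ _ _ (eval (fun i => eval rho (s i)))) // => u _ /=;
    rewrite eval_tsubst.
- by rewrite IH.
- by rewrite IHB IHC.
- by rewrite IHB IHC.
- have E : forall d, sat (scons d rho) (fsubst (up s) B) <-> sat (scons d (fun i => eval rho (s i))) B.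
    move=> d; rewrite IH; apply: sat_ext; case=> //= j; by rewrite eval_tsubst.
  by split=> Hd d; apply/E.
- have E : forall d, sat (scons d rho) (fsubst (up s) B) <-> sat (scons d (fun i => eval rho (s i))) B.
    move=> d; rewrite IH; apply: sat_ext; case=> //= j; by rewrite eval_tsubst.
  by split=> -[d Hd]; exists d; apply/E.
Qed.

Lemma sat_inst (M : structure) (rho : nat -> dom M) B t :
  sat rho (inst B t) <-> sat (scons (eval rho t) rho) B.
Proof. by rewrite /inst sat_fsubst; apply: sat_ext; case. Qed.

Lemma fsize_fsubst A s : fsize (fsubst s A) = fsize A.
Proof. by elim: A s => //= [B IH|B IHB C IHC|B IHB C IHC|B IH|B IH] s; rewrite ?IH ?IHB ?IHC. Qed.

Lemma skf_valid (M : structure) n : forall q A (rho : nat -> dom M),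
  if q then (sat rho (skf n q A) -> sat rho A) else (sat rho A -> sat rho (skf n q A)).
Proof.
elim: n => [|n IH] q A rho; first by case: q.
case: A => [t u|p a ts|B|B C|B C|B|B] /=; case: q => //=.
- by move=> H HB; apply: H; exact: (IH false B rho HB).
- by move=> H HB; apply: H; exact: (IH true B rho HB).
- by case=> H1 H2; split; [exact: (IH true B rho H1)|exact: (IH true C rho H2)].
- by case=> H1 H2; split; [exact: (IH false B rho H1)|exact: (IH false C rho H2)].
- by case=> H; [left; exact: (IH true B rho H)|right; exact: (IH true C rho H)].
- by case=> H; [left; exact: (IH false B rho H)|right; exact: (IH false C rho H)].
- by move=> H d; exact: (IH true B _ (H d)).
- by move=> H; apply: (IH false); apply/sat_inst.
- by move=> /(IH true) /sat_inst H; eexists; exact: H.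
- by case=> d H; exists d; exact: (IH false B _ H).
Qed.

Fixpoint pol (b : bool) (A : form) : bool :=
  match A with
  | Eq _ _ | Pr _ _ _ => true
  | Neg B => pol (~~ b) B
  | And B C | Or B C => pol b B && pol b C
  | All B => b && pol b B
  | Ex B => ~~ b && pol b B
  end.

Lemma skf_pol n : forall q A, fsize A <= n -> pol q (skf n q A).
Proof.
elim: n => [|n IH] q A; first by case: A.
case: A => [t u|p a ts|B|B C|B C|B|B] //= Hs.
- by rewrite IH.
- by rewrite !IH //; lia.
- by rewrite !IH //; lia.
- case: q; rewrite /= ?IH // /inst fsize_fsubst //.
- case: q; rewrite /= ?IH // /inst fsize_fsubst //.
Qed.

Lemma term_over_mono (F F' : Defs.fsym -> Prop) t :
  (forall f, F f -> F' f) -> term_over F t -> term_over F' t.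
Proof.
move=> HF; elim/term_ind': t => [i|f ts IH] // /term_over_App [Hf [Hs H]].
apply/term_over_App; split; [exact: HF|split=> // u Hu]; exact: IH (H u Hu).
Qed.

Lemma form_over_mono (L1 L2 : lang) A :
  (forall f, lfun L1 f -> lfun L2 f) -> (forall p a, lpred L1 p a -> lpred L2 p a) ->
  form_over L1 A -> form_over L2 A.
Proof.
move=> HF HP; elim: A => /= [t u|p a ts|B IH|B IHB C IHC|B IHB C IHC|B IH|B IH] //;
  try tauto.
- by case=> ??; split; apply: term_over_mono HF _.
- by case=> H1 [H2 H3]; do 2 (split; first by auto); move=> t Ht; apply: term_over_mono HF _; auto.
Qed.

Lemma In_map A B (f : A -> B) l u : List.In u (map f l) -> exists v, List.In v l /\ u = f v.
Proof. elim: l => //= a l IH [<-|/IH [v [Hv ->]]]; [exists a|exists v]; tauto. Qed.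

Lemma tsubst_over (F : Defs.fsym -> Prop) s t :
  term_over F t -> (forall i, i \in fv_term t -> term_over F (s i)) ->
  term_over F (tsubst s t).
Proof.
elim/term_ind': t => [i|f ts IH]; first by move=> _ H; apply: H; rewrite inE.
move=> /term_over_App [Hf [Hs H]] Hsub; rewrite tsubst_App; apply/term_over_App.
split=> //; split; first by rewrite size_map.
move=> u Hu; case: (In_map Hu) => v [Hv ->]; apply: IH => //; first exact: H.
move=> i Hi; apply: Hsub; rewrite fv_App; apply/mem_fv_terms; by exists v.
Qed.

Lemma fsubst_over (L : lang) A s :
  form_over L A -> (forall i, i \in fv_form A -> term_over (lfun L) (s i)) ->
  form_over L (fsubst s A).
Proof.
elim: A s => /= [t u|p a ts|B IH|B IHB C IHC|B IHB C IHC|B IH|B IH] s.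
- case=> H1 H2 Hs; split; apply: tsubst_over => // i Hi; apply: Hs; rewrite mem_cat Hi ?orbT //.
- case=> H1 [H2 H3] Hs; split=> //; split; first by rewrite size_map.
  move=> u Hu; case: (In_map Hu) => v [Hv ->]; apply: tsubst_over; first exact: H3.
  move=> i Hi; apply: Hs; apply/mem_fv_terms; by exists v.
- by move=> H Hs; apply: IH.
- case=> H1 H2 Hs; split; [apply: IHB|apply: IHC] => // i Hi; apply: Hs; rewrite mem_cat Hi ?orbT //.
- case=> H1 H2 Hs; split; [apply: IHB|apply: IHC] => // i Hi; apply: Hs; rewrite mem_cat Hi ?orbT //.
- move=> H Hs; apply: IH => // -[|j] Hj //=; apply: tsubst_over => //.
  + apply: Hs; apply/mapP; exists j.+1 => //; by rewrite mem_filter.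
- move=> H Hs; apply: IH => // -[|j] Hj //=; apply: tsubst_over => //.
  + apply: Hs; apply/mapP; exists j.+1 => //; by rewrite mem_filter.
Qed.

Lemma occurs_term_over f (F : Defs.fsym -> Prop) t : occurs_term f t -> term_over F t -> F f.
Proof.
elim/term_ind': t => [i|g ts IH] //.
move=> /occurs_App [<-|[u [Hu Ho]]] /term_over_App [Hg [_ H]] //.
exact: IH Hu Ho (H u Hu).
Qed.

Lemma occurs_form_over f (L : lang) A : occurs_form f A -> form_over L A -> lfun L f.
Proof.
elim: A => /= [t u|p a ts|B IH|B IHB C IHC|B IHB C IHC|B IH|B IH]; try tauto.
- by case=> H [H1 H2]; [apply: occurs_term_over H H1|apply: occurs_term_over H H2].
- by case=> t [Ht Ho] [_ [_ H]]; apply: occurs_term_over Ho (H t Ht).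
Qed.

Definition Ltriv : lang := Lang (fun _ => True) (fun _ _ => True).

Lemma over_of_triv_term (F : Defs.fsym -> Prop) t :
  term_over (fun _ => True) t -> (forall f, occurs_term f t -> F f) -> term_over F t.
Proof.
elim/term_ind': t => [i|g ts IH] // /term_over_App [_ [Hs H]] Ho.
apply/term_over_App; split; first by apply: Ho; apply/occurs_App; left.
split=> // u Hu; apply: IH => //; first exact: H.
by move=> f Hf; apply: Ho; apply/occurs_App; right; exists u.
Qed.

Lemma over_of_triv (L : lang) A : (forall p a, lpred L p a) ->
  form_over Ltriv A -> (forall f, occurs_form f A -> lfun L f) -> form_over L A.
Proof.
move=> HP; elim: A => /= [t u|p a ts|B IH|B IHB C IHC|B IHB C IHC|B IH|B IH]; try by auto.
- by case=> H1 H2 Ho; split; apply: over_of_triv_term => // f Hf; apply: Ho; tauto.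
- case=> _ [H1 H2] Ho; split=> //; split=> // t Ht; apply: over_of_triv_term; first exact: H2.
  by move=> f Hf; apply: Ho; exists t.
- by case=> H1 H2 Ho; split; [apply: IHB|apply: IHC] => // f Hf; apply: Ho; tauto.
- by case=> H1 H2 Ho; split; [apply: IHB|apply: IHC] => // f Hf; apply: Ho; tauto.
Qed.

Lemma skterm_over (F : Defs.fsym -> Prop) q B : F (FSk q B) -> term_over F (skterm q B).
Proof.
move=> H; apply/term_over_App; split=> //; split; first by rewrite size_map.
by move=> u Hu; case: (In_map Hu) => v [_ ->].
Qed.

Section SkOver.
Variables (Ls : nat -> lang)
  (mono_f : forall n f, lfun (Ls n) f -> lfun (Ls n.+1) f)
  (mono_p : forall n p a, lpred (Ls n) p a -> lpred (Ls n.+1) p a)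
  (hsk : forall n q B, form_over (Ls n) (Qnt q B) -> lfun (Ls n.+1) (FSk q B)).

Lemma over_step n A : form_over (Ls n) A -> form_over (Ls n.+1) A.
Proof. by move=> H; apply: (form_over_mono (L1 := Ls n)) H; [exact: mono_f|exact: mono_p]. Qed.

Lemma over_up n j A : form_over (Ls n) A -> form_over (Ls (n + j)) A.
Proof. elim: j => [|j IH]; rewrite ?addn0 // addnS => H; exact: over_step (IH H). Qed.

Lemma inst_sk_over n q B : form_over (Ls n) (Qnt q B) ->
  form_over (Ls n.+1) (inst B (skterm q B)).
Proof.
move=> H; apply: fsubst_over.
  by apply: over_step; case: q H.
by case=> [|j] _ //=; apply: skterm_over; apply: hsk.
Qed.

Lemma skf_over fuel : forall n q A, form_over (Ls n) A -> form_over (Ls (n + fuel)) (skf fuel q A).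
Proof.
elim: fuel => [|fuel IH] n q A; first by rewrite addn0.
case: A => [t u|p a ts|B|B C|B C|B|B] H; rewrite addnS.
- exact: over_step (over_up fuel H).
- exact: over_step (over_up fuel H).
- move: H => /= H; exact: over_step (IH _ _ _ H).
- by move: H => /= -[H1 H2]; split; apply: over_step; apply: IH.
- by move: H => /= -[H1 H2]; split; apply: over_step; apply: IH.
- move: H => /= H; case: q => /=; first exact: over_step (IH _ _ _ H).
  rewrite -addSn; apply: IH; exact: (inst_sk_over (q:=false)).
- move: H => /= H; case: q => /=; last exact: over_step (IH _ _ _ H).
  rewrite -addSn; apply: IH; exact: (inst_sk_over (q:=true)).
Qed.
End SkOver.

Lemma closeAll_over L n A : form_over L A -> form_over L (closeAll n A).
Proof. by elim: n => //= n IH /IH. Qed.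

Lemma ind_body_over (L : lang) phi k : form_over L phi -> lfun L zero -> lfun L succ ->
  form_over L (ind_body phi k).
Proof.
move=> H Hz Hs.
have H' : form_over L (fsubst (fun i => if i == k then Var 0 else Var i.+1) phi).
  by apply: fsubst_over => // i _ /=; case: ifP.
rewrite /ind_body /Imp /=; split; [split; [|split]|] => //.
- by apply: fsubst_over => // -[|i] _ //=.
- by apply: fsubst_over => // -[|i] _ //=.
Qed.

Lemma lpred_skclos L n : lpred (skclos L n) = lpred L.
Proof. by case: n. Qed.

Lemma skclos_mono L n m f : n <= m -> lfun (skclos L n) f -> lfun (skclos L m) f.
Proof.
elim: m => [|m IH]; first by rewrite leqn0 => /eqP ->.
rewrite leq_eqVlt => /orP [/eqP -> //|]; rewrite ltnS => /IH H /H /=; tauto.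
Qed.

Lemma skf_over_skclos L n q A fuel : form_over (skclos L n) A ->
  form_over (skclos L (n + fuel)) (skf fuel q A).
Proof.
apply: (skf_over (Ls := skclos L)).
- by move=> m f /= H; left.
- by move=> m p a; rewrite !lpred_skclos.
- by move=> m q' B H /=; right; exists q', B.
Qed.

Lemma skf_over_triv q A fuel : form_over Ltriv A -> form_over Ltriv (skf fuel q A).
Proof. by move=> H; exact: (@skf_over (fun _ => Ltriv) (fun _ _ h => h) (fun _ _ _ h => h) (fun _ _ _ _ => I) fuel 0 q A H). Qed.

Lemma inst_sk_over_skclos L n q B : form_over (skclos L n) (Qnt q B) ->
  form_over (skclos L n.+1) (inst B (skterm q B)).
Proof.
apply: (inst_sk_over (Ls := skclos L)).
- by move=> m f /= H; left.
- by move=> m p a; rewrite !lpred_skclos.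
- by move=> m q' B' H /=; right; exists q', B'.
Qed.

Lemma max_In A (l : seq A) (Q : nat -> A -> Prop) :
  (forall n m x, n <= m -> Q n x -> Q m x) ->
  (forall x, List.In x l -> exists n, Q n x) -> exists n, forall x, List.In x l -> Q n x.
Proof.
move=> Hm; elim: l => [|a l IH] H; first by exists 0.
case: (H a (or_introl erefl)) => n1 H1.
case: IH => [x Hx|n2 H2]; first by apply: H; right.
exists (maxn n1 n2) => x /= [<-|Hx]; first by apply: Hm H1; rewrite leq_maxl.
by apply: Hm (H2 x Hx); rewrite leq_maxr.
Qed.

Lemma max_mem (l : seq nat) (Q : nat -> nat -> Prop) :
  (forall n m x, n <= m -> Q n x -> Q m x) ->
  (forall x, x \in l -> exists n, Q n x) -> exists n, forall x, x \in l -> Q n x.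
Proof.
move=> Hm; elim: l => [|a l IH] H; first by exists 0.
case: (H a (mem_head _ _)) => n1 H1.
case: IH => [x Hx|n2 H2]; first by apply: H; rewrite inE Hx orbT.
exists (maxn n1 n2) => x; rewrite inE => /orP [/eqP ->|Hx]; first by apply: Hm H1; rewrite leq_maxl.
by apply: Hm (H2 x Hx); rewrite leq_maxr.
Qed.

Lemma term_lift L (F : Defs.fsym -> Prop) t :
  (forall f, F f -> exists n, lfun (skclos L n) f) ->
  term_over F t -> exists n, term_over (lfun (skclos L n)) t.
Proof.
move=> HF; elim/term_ind': t => [i|f ts IH]; first by exists 0.
move=> /term_over_App [Hf [Hs H]].
case: (HF f Hf) => n1 Hn1.
case: (@max_In _ ts (fun n u => term_over (lfun (skclos L n)) u)).
- move=> n m x Hnm; apply: term_over_mono => g; exact: skclos_mono.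
- by move=> u Hu; apply: IH => //; apply: H.
move=> n2 H2; exists (maxn n1 n2); apply/term_over_App; split.
  by apply: skclos_mono Hn1; rewrite leq_maxl.
split=> // u Hu; apply: term_over_mono (H2 u Hu) => g; apply: skclos_mono; exact: leq_maxr.
Qed.

Definition upd (D : Type) (rho : nat -> D) (k : nat) (d : D) : nat -> D :=
  fun i => if i == k then d else rho i.

Lemma ind_body_char (M : structure) (rho : nat -> dom M) phi k :
  sat rho (ind_body phi k) <->
  ((sat (upd rho k (@ifun M zero [::])) phi /\
    (forall d, sat (upd rho k d) phi -> sat (upd rho k (@ifun M succ [:: d])) phi)) ->
   forall d, sat (upd rho k d) phi).
Proof.
pose phi' := fsubst (fun i => if i == k then Var 0 else Var i.+1) phi.
have E : forall d (rho' : nat -> dom M), sat (scons d rho') phi' <-> sat (upd rho' k d) phi.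
  move=> d rho'; rewrite /phi' sat_fsubst; apply: sat_ext => i /=; rewrite /upd.
  by case: ifP.
have E0 : sat rho (inst phi' Tzero) <-> sat (upd rho k (@ifun M zero [::])) phi.
  by rewrite sat_inst E.
have ES : forall d, sat (scons d rho) (fsubst (fun i => if i is j.+1 then Var j.+1 else Ts (Var 0)) phi')
   <-> sat (upd rho k (@ifun M succ [:: d])) phi.
  move=> d; rewrite sat_fsubst -E; apply: sat_ext; by case.
rewrite /ind_body /Imp /= -/phi'; split.
- case=> [Hn|Hall] [H0 Hst] d; last exact/E.
  exfalso; apply: Hn; split; first exact/E0.
  move=> d'; case: (classic (sat (scons d' rho) phi')) => h; [right|by left].
  by apply/ES; apply: Hst; apply/E.
- move=> H; case: (classic (forall d, sat (upd rho k d) phi)) => Hc.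
    by right=> d; apply/E.
  left=> -[H0 Hst]; apply: Hc; apply: H; split; first exact/E0.
  by move=> d /E Hd; apply/ES; case: (Hst d).
Qed.

Lemma closeAll_elim (M : structure) n A :
  (forall rho : nat -> dom M, sat rho (closeAll n A)) -> forall rho : nat -> dom M, sat rho A.
Proof.
elim: n => // n IH H; apply: IH => rho.
apply: (proj1 (@sat_ext M _ _ _ _)) (H (fun i => rho i.+1) (rho 0)); by case.
Qed.

Lemma closeAll_intro (M : structure) n A :
  (forall rho : nat -> dom M, sat rho A) -> forall rho : nat -> dom M, sat rho (closeAll n A).
Proof. elim: n => [|n IH] H rho; first exact: H rho. move=> d; exact: IH H _. Qed.

Lemma ib_subst (M : structure) (rho rho2 : nat -> dom M) s g k :
  s k = Var k -> (forall d i, i != k -> eval (upd rho k d) (s i) = rho2 i) ->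
  (sat rho (ind_body (fsubst s g) k) <-> sat rho2 (ind_body g k)).
Proof.
move=> Hk H; rewrite !ind_body_char.
have E : forall d, sat (upd rho k d) (fsubst s g) <-> sat (upd rho2 k d) g.
  move=> d; rewrite sat_fsubst; apply: sat_ext => i; rewrite {2}/upd.
  case: eqP => [->|/eqP ne]; last exact: H.
  by rewrite Hk /= /upd eqxx.
split=> Hc [H0 Hst] d; apply/E; apply: Hc; (split; [exact/E|]).
- by move=> d' /E /Hst /E.
- by move=> d' /E /Hst /E.
Qed.

Lemma eval_closed (M : structure) (rho rho' : nat -> dom M) t :
  fv_term t = [::] -> eval rho t = eval rho' t.
Proof. by move=> H; apply: eval_coinc => i; rewrite H. Qed.

Section Canon.
Variables (L : lang) (D : Type) (inh : D) (I : Defs.fsym -> seq D -> D)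
  (P : nat -> nat -> seq D -> Prop).

Definition sc (d : D) (rho : nat -> D) : nat -> D := fun i => if i is j.+1 then rho j else d.

Fixpoint Ival (f : Defs.fsym) (args : seq D) {struct f} : D :=
  match f with
  | FB n a => I (FB n a) args
  | FSk q B =>
      if excluded_middle_informative (lfun L (FSk q B)) then I (FSk q B) args
      else epsilon (inhabits inh) (fun d => exists rho : nat -> D,
             map rho (fvs (Qnt q B)) = args /\
             (if q then satI (sc d rho) B else ~ satI (sc d rho) B))
  end
with evalI (rho : nat -> D) (t : term) {struct t} : D :=
  match t with
  | Var i => rho i
  | App f ts => Ival f ((fix el (l : list term) : seq D :=
                   match l with [::] => [::] | u :: l' => evalI rho u :: el l' end) ts)
  end
with satI (rho : nat -> D) (A : form) {struct A} : Prop :=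
  match A with
  | Eq t u => evalI rho t = evalI rho u
  | Pr p a ts => P p a (map (evalI rho) ts)
  | Neg B => ~ satI rho B
  | And B C => satI rho B /\ satI rho C
  | Or B C => satI rho B \/ satI rho C
  | All B => forall d, satI (sc d rho) B
  | Ex B => exists d, satI (sc d rho) B
  end.

Definition Mc : structure := Structure inh Ival P.

Lemma evalI_eq (rho : nat -> D) t : @eval Mc rho t = evalI rho t.
Proof.
elim/term_ind': t => [i|f ts IH] //.
rewrite eval_App /=; congr Ival; elim: ts IH => //= u l IHl IH.
by rewrite IH ?IHl //; [move=> v Hv; apply: IH; right|left].
Qed.

Lemma satI_eq (rho : nat -> D) A : @sat Mc rho A <-> satI rho A.
Proof.
elim: A rho => /= [t u|p a ts|B IH|B IHB C IHC|B IHB C IHC|B IH|B IH] rho.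
- by rewrite !evalI_eq.
- by rewrite (@map_ext_In _ _ _ (evalI rho)) // => u _; rewrite evalI_eq.
- by rewrite IH.
- by rewrite IHB IHC.
- by rewrite IHB IHC.
- by split=> H d; apply/IH; apply: H.
- by split=> -[d H]; exists d; apply/IH.
Qed.

Lemma map_eq_mem (f g : nat -> D) (l : seq nat) x :
  map f l = map g l -> x \in l -> f x = g x.
Proof.
elim: l => //= a l IH [E1 E2]; rewrite inE => /orP [/eqP ->//|]; exact: IH.
Qed.

Lemma mem_fvs i A : (i \in fvs A) = (i \in fv_form A).
Proof. by rewrite /fvs mem_sort mem_undup. Qed.

Lemma coinc_q q B (rho rho0 : nat -> D) d :
  map rho0 (fvs (Qnt q B)) = map rho (fvs (Qnt q B)) ->
  (@sat Mc (@scons Mc d rho0) B <-> @sat Mc (@scons Mc d rho) B).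
Proof.
move=> E; apply: sat_coinc => -[|j] Hj //=.
apply: (map_eq_mem E); rewrite mem_fvs.
have -> : fv_form (Qnt q B) = [seq i.-1 | i <- fv_form B & i != 0] by clear E; case: q.
by apply/mapP; exists j.+1 => //; rewrite mem_filter.
Qed.

Lemma canon q B (rho : nat -> D) :
  ~ lfun L (FSk q B) ->
  let c := Ival (FSk q B) (map rho (fvs (Qnt q B))) in
  if q then ((exists d, @sat Mc (@scons Mc d rho) B) -> @sat Mc (@scons Mc c rho) B)
  else ((exists d, ~ @sat Mc (@scons Mc d rho) B) -> ~ @sat Mc (@scons Mc c rho) B).
Proof.
case: q => nL c.
- pose Pd := (fun d => exists rho0 : nat -> D, map rho0 (fvs (Qnt true B)) = map rho (fvs (Qnt true B)) /\
             satI (sc d rho0) B).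
  have Ec : c = epsilon (inhabits inh) Pd.
    by rewrite /c /=; case: excluded_middle_informative.
  rewrite Ec => -[d Hd].
  have : Pd d by exists rho; split=> //; apply/satI_eq.
  move=> HPd; case: (epsilon_spec (inhabits inh) Pd (ex_intro _ d HPd)) => rho0 [E H].
  apply/(coinc_q (q:=true) _ E); exact/satI_eq.
- pose Pd := (fun d => exists rho0 : nat -> D, map rho0 (fvs (Qnt false B)) = map rho (fvs (Qnt false B)) /\
             ~ satI (sc d rho0) B).
  have Ec : c = epsilon (inhabits inh) Pd.
    by rewrite /c /=; case: excluded_middle_informative.
  rewrite Ec => -[d Hd].
  have : Pd d by exists rho; split=> // /satI_eq.
  move=> HPd; case: (epsilon_spec (inhabits inh) Pd (ex_intro _ d HPd)) => rho0 [E H].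
  move/(coinc_q (q:=false) _ E)/satI_eq; exact: H.
Qed.

Lemma eval_skterm (rho : nat -> D) q B :
  @eval Mc rho (skterm q B) = Ival (FSk q B) (map rho (fvs (Qnt q B))).
Proof. by rewrite /skterm eval_App -map_comp. Qed.

Hypothesis HL : skolem_free L.

Lemma notL n q B : form_over (skclos L n) (Qnt q B) -> ~ lfun L (FSk q B).
Proof. by move=> H /HL; apply; exists n, q, B. Qed.

Lemma sk_equiv fuel : forall n q A (rho : nat -> D), form_over (skclos L n) A ->
  (@sat Mc rho (skf fuel q A) <-> @sat Mc rho A).
Proof.
elim: fuel => [|fuel IH] n q A rho H //.
case: A H => [t u|p a ts|B|B C|B C|B|B] H //=; move: H => /= H.
- by rewrite (IH n).
- by case: H => H1 H2; rewrite (IH n _ _ _ H1) (IH n _ _ _ H2).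
- by case: H => H1 H2; rewrite (IH n _ _ _ H1) (IH n _ _ _ H2).
- case: q.
    by split=> Hd d; apply/(IH n _ _ _ H); apply: Hd.
  have Ho : form_over (skclos L n) (Qnt false B) by [].
  rewrite (IH n.+1 _ _ _ (inst_sk_over_skclos Ho)) sat_inst eval_skterm.
  split; last by move=> Hd; apply: Hd.
  move=> Hc d; apply: NNPP => Hn.
  exact: (canon (q:=false) rho (notL Ho) (ex_intro _ d Hn) Hc).
- case: q; last first.
    by split=> /= -[d Hd]; exists d; move: Hd; rewrite (IH n _ _ _ H).
  have Ho : form_over (skclos L n) (Qnt true B) by [].
  rewrite (IH n.+1 _ _ _ (inst_sk_over_skclos Ho)) sat_inst eval_skterm.
  split; first by move=> Hc; eexists; exact: Hc.
  by move=> Hd; apply: (canon (q:=true) rho (notL Ho) Hd).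
Qed.
End Canon.

Lemma eval_agree D (inh1 inh2 : D) I1 I2 P (rho : nat -> D) t :
  (forall f, occurs_term f t -> forall args, I1 f args = I2 f args) ->
  @eval (Structure inh1 I1 P) rho t = @eval (Structure inh2 I2 P) rho t.
Proof.
elim/term_ind': t => [i|f ts IH] // H.
rewrite !eval_App /= H; last by apply/occurs_App; left.
congr I2; apply: map_ext_In => u Hu; apply: IH => // g Hg; apply: H.
by apply/occurs_App; right; exists u.
Qed.

Lemma sat_agree D (inh1 inh2 : D) I1 I2 P (rho : nat -> D) A :
  (forall f, occurs_form f A -> forall args, I1 f args = I2 f args) ->
  (@sat (Structure inh1 I1 P) rho A <-> @sat (Structure inh2 I2 P) rho A).
Proof.
elim: A rho => /= [t u|p a ts|B IH|B IHB C IHC|B IHB C IHC|B IH|B IH] rho H.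
- by rewrite (@eval_agree _ inh1 inh2 I1 I2 P rho t) ?(@eval_agree _ inh1 inh2 I1 I2 P rho u) // => f Hf; apply: H; tauto.
- rewrite (@map_ext_In _ _ _ (@eval (Structure inh2 I2 P) rho)) // => u Hu.
  by apply: (@eval_agree _ inh1 inh2 I1 I2 P rho u) => f Hf; apply: H; exists u.
- by rewrite IH.
- by rewrite IHB ?IHC // => f Hf; apply: H; tauto.
- by rewrite IHB ?IHC // => f Hf; apply: H; tauto.
- by split=> Hd d; move: (Hd d); rewrite (IH _ H).
- by split=> -[d Hd]; exists d; move: Hd; rewrite (IH _ H).
Qed.

Section Main.
Variables (L : lang) (T G : form -> Prop).
Hypotheses (HL : skolem_free L) (Hz : lfun L zero) (Hs : lfun L succ)
  (HT : forall A, T A -> form_over L A /\ sentence A)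
  (HG : forall A, G A -> form_over L A).

Lemma over_L_skclos n A : form_over L A -> form_over (skclos L n) A.
Proof.
apply: form_over_mono => [f|p a]; first exact: (@skclos_mono L 0 n).
by rewrite lpred_skclos.
Qed.

Lemma new_ax_lang (F : Defs.fsym -> Prop) g s k :
  (forall f, F f -> exists n, lfun (skclos L n) f) -> G g ->
  (forall i, s i = Var i \/ ground_over F (s i)) ->
  exists n, form_over (skclos L n) (Ix (fsubst s g) k).
Proof.
move=> HF Gg Hsi.
case: (@max_mem (fv_form g) (fun n i => term_over (lfun (skclos L n)) (s i))).
- move=> n m x Hnm; apply: term_over_mono => f; exact: skclos_mono.
- move=> i _; case: (Hsi i) => [->|[_ Ho]]; first by exists 0.
  exact: term_lift HF Ho.
move=> n Hn; exists n; apply: closeAll_over; apply: ind_body_over.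
- by apply: fsubst_over => //; apply: over_L_skclos; apply: HG.
- exact: (@skclos_mono L 0 n).
- exact: (@skclos_mono L 0 n).
Qed.

Lemma lang_inv m :
  (forall f, tfun (GSIn G m (skT L T)) f -> exists n, lfun (skclos L n) f) /\
  (forall A, tax (GSIn G m (skT L T)) A -> exists n, form_over (skclos L n) A).
Proof.
elim: m => [|m [IHf IHa]].
  have HskT : forall A, skE T A -> exists n, form_over (skclos L n) A.
    move=> _ [B [HB ->]]; exists (0 + fsize B); apply: skf_over_skclos.
    exact: (proj1 (HT HB)).
  split.
    move=> f [Hf|[A [HA Ho]]]; first by exists 0.
    by case: (HskT A HA) => n Hn; exists n; apply: occurs_form_over Ho Hn.
  by move=> A [//|HA]; apply: HskT.
have Hnew : forall A, skE (IND (minus (down G (tfun (GSIn G m (skT L T)))))) A ->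
    exists n, form_over (skclos L n) A.
  move=> _ [B [[phi [k [[[g [s [Gg [Hsi ->]]]] _] ->]]] ->]].
  case: (new_ax_lang k IHf Gg Hsi) => n Hn.
  by exists (n + fsize (Ix (fsubst s g) k)); apply: skf_over_skclos.
split.
  move=> f [Hf|[A [HA Ho]]]; first exact: IHf.
  by case: (Hnew A HA) => n Hn; exists n; apply: occurs_form_over Ho Hn.
by move=> A [HA|HA]; [apply: IHa|apply: Hnew].
Qed.

Lemma forward : consistent (fun A => T A \/ IND G A) -> consistent (GSIomega G (skT L T)).
Proof.
case=> -[D inh I P] HM.
pose M := Structure inh I P.
pose Mc' := Mc L inh I P.
have HagL : forall A (rho : nat -> D), form_over L A -> (@sat Mc' rho A <-> @sat M rho A).
  move=> A rho HA; apply: sat_agree => f Hf args.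
  have := occurs_form_over Hf HA; case: f {Hf} => //= q B HLf.
  by case: excluded_middle_informative.
have Hall : forall m A, tax (GSIn G m (skT L T)) A -> forall rho : nat -> D, @sat Mc' rho A.
  elim=> [|m IH] A.
    case=> // -[B [HB ->]] rho.
    have HBo := proj1 (HT HB).
    rewrite /sk (@sk_equiv L D inh I P HL _ 0) //.
    by apply/HagL => //; apply: HM; left.
  case=> [HA|]; first exact: IH.
  move=> [B [[phi [k [[[g [s [Gg [Hsi ->]]]] _] ->]]] ->]] rho.
  case: (new_ax_lang k (proj1 (lang_inv m)) Gg Hsi) => n Hn.
  rewrite /sk (@sk_equiv L D inh I P HL _ n) //.
  apply: closeAll_intro => {}rho.
  have HgMc : forall rho : nat -> D, @sat Mc' rho (ind_body g k).
    move=> rho'; have := closeAll_elim (HM (Ix g k) (or_intror (ex_intro _ g (ex_intro _ k (conj Gg erefl))))) rho'.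
    rewrite !ind_body_char => Hc [H0 Hst] d.
    have E : forall r : nat -> D, @sat Mc' r g <-> @sat M r g by move=> r; apply: HagL; apply: HG.
    apply/E; apply: Hc; split; first exact/E.
    by move=> d' /E /Hst /E.
  case: (Hsi k) => [Ek|[Gk _]].
    apply/(ib_subst (rho2 := fun i => @eval Mc' rho (s i))) => // d i Hik.
    case: (Hsi i) => [->|[Gi _]]; first by rewrite /= /upd (negbTE Hik).
    exact: eval_closed.
  apply/ind_body_char => -[H0 _] d.
  have E : forall d d', @sat Mc' (upd rho k d) (fsubst s g) <-> @sat Mc' (upd rho k d') (fsubst s g).
    move=> d1 d2; rewrite !sat_fsubst; apply: sat_ext => i.
    case: (Hsi i) => [Ei|[Gi _]]; last exact: eval_closed.
    rewrite Ei /= /upd; case: eqP => // Eik.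
    by move: Gk; rewrite -Eik Ei.
  exact/(E _ (@ifun Mc' zero [::])).
by exists Mc' => A [m HA]; apply: Hall HA.
Qed.
End Main.

Lemma fv_tsubst i s t : i \in fv_term (tsubst s t) -> exists2 j, j \in fv_term t & i \in fv_term (s j).
Proof.
elim/term_ind': t => [j|f ts IH]; first by move=> H; exists j; rewrite ?inE.
rewrite tsubst_App fv_App => /mem_fv_terms [u [Hu Hi]].
case: (In_map Hu) => v [Hv Ev]; subst u.
case: (IH v Hv Hi) => j Hj Hij; exists j => //; rewrite fv_App; apply/mem_fv_terms.
by exists v.
Qed.

Lemma fv_fsubst i s A : i \in fv_form (fsubst s A) -> exists2 j, j \in fv_form A & i \in fv_term (s j).
Proof.
elim: A i s => /= [t u|p a ts|B IH|B IHB C IHC|B IHB C IHC|B IH|B IH] i s.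
- rewrite mem_cat => /orP [/fv_tsubst [j Hj Hi]|/fv_tsubst [j Hj Hi]]; exists j => //;
  by rewrite mem_cat Hj ?orbT.
- move/mem_fv_terms => [u [Hu Hi]]; case: (In_map Hu) => v [Hv Ev]; subst u.
  case: (fv_tsubst Hi) => j Hj Hij; exists j => //; apply/mem_fv_terms; by exists v.
- exact: IH.
- rewrite mem_cat => /orP [/IHB [j Hj Hi]|/IHC [j Hj Hi]]; exists j => //;
  by rewrite mem_cat Hj ?orbT.
- rewrite mem_cat => /orP [/IHB [j Hj Hi]|/IHC [j Hj Hi]]; exists j => //;
  by rewrite mem_cat Hj ?orbT.
- case/mapP=> i' ; rewrite mem_filter => /andP [Hi0 Hi'] ->.
  case: (IH _ _ Hi') => -[|j] Hj /=; first by rewrite inE => /eqP E; rewrite E in Hi0.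
  case/fv_tsubst => l Hl; rewrite inE => /eqP -> /=.
  by exists j => //; apply/mapP; exists j.+1; rewrite ?mem_filter.
- case/mapP=> i' ; rewrite mem_filter => /andP [Hi0 Hi'] ->.
  case: (IH _ _ Hi') => -[|j] Hj /=; first by rewrite inE => /eqP E; rewrite E in Hi0.
  case/fv_tsubst => l Hl; rewrite inE => /eqP -> /=.
  by exists j => //; apply/mapP; exists j.+1; rewrite ?mem_filter.
Qed.

Lemma size_undup_le1 (l : seq nat) k : (forall x, x \in l -> x = k) -> size (undup l) <= 1.
Proof.
move=> H; apply: (@leq_trans (size [:: k])) => //; apply: uniq_leq_size; first exact: undup_uniq.
by move=> x; rewrite mem_undup => /H ->; rewrite inE.
Qed.

Lemma fsize_closeAll n B : fsize (closeAll n B) = n + fsize B.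
Proof. by elim: n => //= n ->. Qed.

Lemma skf_closeAll n f B : skf (n + f) true (closeAll n B) = closeAll n (skf f true B).
Proof. by elim: n => //= n ->. Qed.

Lemma closeAll_over_inv L n B : form_over L (closeAll n B) -> form_over L B.
Proof. by elim: n => //= n IH /IH. Qed.

Section Back.
Variables (L : lang) (T G : form -> Prop).
Hypotheses (Hz : lfun L zero) (Hs : lfun L succ)
  (HT : forall A, T A -> form_over L A /\ sentence A)
  (HG : forall A, G A -> form_over L A).

Definition Tn m := GSIn G m (skT L T).
Definition Lw (f : Defs.fsym) := exists m, tfun (Tn m) f.
Definition LN := Lang Lw (fun _ _ => True).

Lemma tfun_mono m m' f : m <= m' -> tfun (Tn m) f -> tfun (Tn m') f.
Proof.
elim: m' => [|m' IH]; first by rewrite leqn0 => /eqP ->.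
rewrite leq_eqVlt => /orP [/eqP -> //|]; rewrite ltnS => /IH H /H Hf.
by left.
Qed.

Lemma tax_occ m A f : tax (Tn m) A -> occurs_form f A -> tfun (Tn m) f.
Proof.
elim: m A => [|m IH] A.
  by case=> // HA Ho; right; exists A.
case=> [HA|HA] Ho; first by left; apply: IH HA Ho.
by right; exists A.
Qed.

Lemma tax_good m A : tax (Tn m) A -> form_over LN A.
Proof.
move=> HA; apply: over_of_triv => //.
  case: ((proj2 (lang_inv Hz Hs HT HG m)) A HA) => n Hn.
  by apply: form_over_mono Hn.
by move=> f Ho; exists m; apply: tax_occ HA Ho.
Qed.

Variables (M : structure)
  (HM : forall A, GSIomega G (skT L T) A -> forall rho : nat -> dom M, sat rho A).

Definition rho0 : nat -> dom M := fun _ => inhab M.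

Definition InN (d : dom M) := exists m t, ground_over (tfun (Tn m)) t /\ eval rho0 t = d.

Lemma InN_zero : InN (eval rho0 Tzero).
Proof. by exists 0, Tzero; split=> //; split=> //=; split=> //; left. Qed.

Lemma ground_mono m m' t : m <= m' -> ground_over (tfun (Tn m)) t -> ground_over (tfun (Tn m')) t.
Proof. move=> H [H1 H2]; split=> //; apply: term_over_mono H2 => f; exact: tfun_mono. Qed.

Lemma InN_list (args : seq (dom M)) : (forall a, List.In a args -> InN a) ->
  exists m ts, (forall u, List.In u ts -> ground_over (tfun (Tn m)) u) /\ map (eval rho0) ts = args.
Proof.
elim: args => [|a l IH] H; first by exists 0, [::].
case: (H a (or_introl erefl)) => m1 [t1 [G1 E1]].
case: IH => [b Hb|m2 [ts [G2 E2]]]; first by apply: H; right.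
exists (maxn m1 m2), (t1 :: ts); split; last by rewrite /= E1 E2.
move=> u /= [<-|Hu]; first by apply: ground_mono G1; rewrite leq_maxl.
by apply: ground_mono (G2 u Hu); rewrite leq_maxr.
Qed.

Lemma flatten_nil_terms ts : (forall u, List.In u ts -> fv_term u = [::]) -> fv_terms ts = [::].
Proof. rewrite /fv_terms; elim: ts => [|u l IH] H //=; rewrite (H u (or_introl erefl)) IH // => v Hv; by apply: H; right. Qed.

Lemma InN_closure f (args : seq (dom M)) : Lw f -> size args = arity f ->
  (forall a, List.In a args -> InN a) -> InN (@ifun M f args).
Proof.
move=> [m0 Hf] Hsz /InN_list [m [ts [Gts Ets]]].
exists (maxn m0 m), (App f ts); split.
  split; first by rewrite fv_App; apply: flatten_nil_terms => u /Gts [].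
  apply/term_over_App; split; first by apply: tfun_mono Hf; rewrite leq_maxl.
  split; first by rewrite -Hsz -Ets size_map.
  by move=> u /Gts /(ground_mono (leq_maxr m0 m)) [].
by rewrite eval_App Ets.
Qed.

Definition DN := {d : dom M | InN d}.
Definition z0 : DN := exist _ _ InN_zero.

Lemma InN_args (args : seq DN) a : List.In a (map (@proj1_sig _ _) args) -> InN a.
Proof. by move=> Ha; case: (In_map Ha) => v [_ ->]; exact: proj2_sig v. Qed.

Definition ifunN (f : Defs.fsym) (args : seq DN) : DN :=
  match excluded_middle_informative (Lw f /\ size args = arity f) with
  | left h => exist _ (@ifun M f (map (@proj1_sig _ _) args))
                (InN_closure (proj1 h) (etrans (size_map _ _) (proj2 h)) (@InN_args args))
  | right _ => z0
  end.

Definition N : structure :=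
  @Structure DN z0 ifunN (fun p a args => ipred p a (map (@proj1_sig _ _) args)).

Lemma sig_eq (x y : DN) : proj1_sig x = proj1_sig y -> x = y.
Proof. case: x y => x px [y py] /= E; subst y; f_equal; apply: proof_irrelevance. Qed.

Lemma eval_transfer t (rho : nat -> DN) (rhoM : nat -> dom M) :
  term_over Lw t -> (forall i, proj1_sig (rho i) = rhoM i) ->
  proj1_sig (@eval N rho t) = eval rhoM t.
Proof.
move=> Ht Hr; elim/term_ind': t Ht => [i|f ts IH]; first by move=> _; apply: Hr.
move=> /term_over_App [Hf [Hsz Hts]]; rewrite eval_App eval_App /= /ifunN.
case: excluded_middle_informative => [h|[]] /=; last by rewrite size_map.
rewrite -map_comp; congr ifun; apply: map_ext_In => u Hu /=; apply: IH => //; exact: Hts.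
Qed.

Lemma transfer A : forall b (rho : nat -> DN) (rhoM : nat -> dom M),
  form_over LN A -> pol b A -> (forall i, proj1_sig (rho i) = rhoM i) ->
  if b then (@sat M rhoM A -> @sat N rho A) else (@sat N rho A -> @sat M rhoM A).
Proof.
elim: A => /= [t u|p a ts|B IH|B IHB C IHC|B IHB C IHC|B IH|B IH] b rho rhoM Ho Hp Hr.
- case: Ho => H1 H2.
  have E : @eval N rho t = @eval N rho u <-> eval rhoM t = eval rhoM u.
    rewrite -(eval_transfer H1 Hr) -(eval_transfer H2 Hr); split; first by move=> ->.
    exact: sig_eq.
  by case: b {Hp}; rewrite E.
- case: Ho => _ [_ H].
  rewrite -map_comp (@map_ext_In _ _ _ (eval rhoM)); first by case: b {Hp}.
  by move=> u Hu /=; apply: eval_transfer => //; apply: H.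
- have := IH (~~ b) rho rhoM Ho Hp Hr; case: b {Hp} => /= H Hn Hx; apply: Hn; exact: H.
- case/andP: Hp => Hp1 Hp2; case: Ho => Ho1 Ho2.
  have := IHB b rho rhoM Ho1 Hp1 Hr; have := IHC b rho rhoM Ho2 Hp2 Hr.
  by case: b {Hp1 Hp2} => /= H2 H1 [h1 h2]; split; auto.
- case/andP: Hp => Hp1 Hp2; case: Ho => Ho1 Ho2.
  have := IHB b rho rhoM Ho1 Hp1 Hr; have := IHC b rho rhoM Ho2 Hp2 Hr.
  by case: b {Hp1 Hp2} => /= H2 H1 [h|h]; auto.
- case/andP: Hp => /= Hb Hp; rewrite Hb in Hp *.
  move=> H d; have := IH true (@scons N d rho) (@scons M (proj1_sig d) rhoM) Ho Hp.
  by apply=> //; case.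
- case/andP: Hp => /= Hb Hp; rewrite (negbTE Hb) in Hp *.
  move=> [d H]; exists (proj1_sig d).
  have := IH false (@scons N d rho) (@scons M (proj1_sig d) rhoM) Ho Hp.
  by apply=> //; case.
Qed.

Lemma key phi k fuel (rho : nat -> DN) :
  fsize (ind_body phi k) <= fuel ->
  form_over LN (skf fuel true (ind_body phi k)) ->
  (forall rhoM : nat -> dom M, sat rhoM (skf fuel true (ind_body phi k))) ->
  @sat N rho (ind_body phi k).
Proof.
move=> Hf Hg HMk.
pose phi' := fsubst (fun i => if i == k then Var 0 else Var i.+1) phi.
pose phi'' := fsubst (fun i => if i is j.+1 then Var j.+1 else Ts (Var 0)) phi'.
pose Q := Or (Neg phi') phi''.
pose c := skterm false Q.
have Eib : ind_body phi k = Or (Neg (And (inst phi' Tzero) (All Q))) (All phi') by [].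
have F1 : fsize phi' = fsize phi by rewrite /phi' fsize_fsubst.
have F2 : fsize phi'' = fsize phi by rewrite /phi'' fsize_fsubst.
have F3 : forall t, fsize (inst phi' t) = fsize phi by move=> t; rewrite /inst fsize_fsubst.
have F4 : forall t, fsize (inst phi'' t) = fsize phi by move=> t; rewrite /inst fsize_fsubst.
have Hsz : 4 * fsize phi + 7 <= fuel.
  by move: Hf; rewrite Eib /= F1 F2 F3; lia.
have [n En] : exists n, fuel = n.+4.+3 by exists (fuel - 7); lia.
subst fuel.
have Esk : skf n.+4.+3 true (ind_body phi k) =
  Or (Neg (And (skf n.+4 false (inst phi' Tzero))
               (Or (Neg (skf n.+1 true (inst phi' c))) (skf n.+2 false (inst phi'' c)))))
     (All (skf n.+4.+1 true phi')) by [].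
rewrite Esk in Hg HMk.
move: Hg => /= [[G1 [G2 G3]] G4].
pose rhoM := fun i => proj1_sig (rho i).
have Hr : forall i, proj1_sig (rho i) = rhoM i by [].
have HM0 := HMk rhoM.
rewrite /=.
case: (classic (forall d : DN, @sat N (@scons N d rho) phi')) => Hall; [by right|left].
move=> [HP HQ]; apply: Hall => d.
case: HM0 => [HM0|HM0]; last first.
  have Hpol : fsize phi' <= n.+4.+1 by rewrite F1; lia.
  have H := @transfer _ true (@scons N d rho) (@scons M (proj1_sig d) rhoM) G4
    (skf_pol true Hpol).
  apply: (@skf_valid N n.+4.+1 true phi'); apply: H; last exact: HM0.
  by case.
exfalso; apply: HM0; split.
  have Hpol : fsize (inst phi' Tzero) <= n.+4 by rewrite F3; lia.
  apply: (@transfer _ false rho rhoM G1 (skf_pol false Hpol) Hr).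
  exact: (@skf_valid N n.+4 false (inst phi' Tzero) rho HP).
case: (HQ (@eval N rho c)) => [HnA|HB]; [left|right].
  move=> HA; apply: HnA.
  have Hpol : fsize (inst phi' c) <= n.+1 by rewrite F3; lia.
  have H := @transfer _ true rho rhoM G2 (skf_pol true Hpol) Hr HA.
  have H' := @skf_valid N n.+1 true (inst phi' c) rho H.
  by move/sat_inst: H'.
have Hpol : fsize (inst phi'' c) <= n.+2 by rewrite F4; lia.
apply: (@transfer _ false rho rhoM G3 (skf_pol false Hpol) Hr).
apply: (@skf_valid N n.+2 false (inst phi'' c) rho); apply/sat_inst; exact: HB.
Qed.

Lemma Ix_eq phi k : exists nn, Ix phi k = closeAll nn (ind_body phi k).
Proof. by eexists. Qed.

Lemma backward : consistent (fun A => T A \/ IND G A).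
Proof.
exists N => A [HA|[g [k [Gg ->]]]] rho.
  have Hax : tax (Tn 0) (sk true A) by right; exists A.
  have Hgood := tax_good Hax.
  have HMA := HM (ex_intro _ 0 Hax) (fun i => proj1_sig (rho i)).
  apply: (@skf_valid N (fsize A) true A rho).
  exact: (@transfer _ true rho _ Hgood (skf_pol true (leqnn _)) (fun i => erefl) HMA).
case: (Ix_eq g k) => nn ->; move: rho; apply: closeAll_intro => rho.
case: (@max_mem (fv_form g) (fun n i => exists t, ground_over (tfun (Tn n)) t /\
           eval rho0 t = proj1_sig (rho i))).
- by move=> n m x Hnm [t [Gt Et]]; exists t; split=> //; apply: ground_mono Gt.
- by move=> i _; case: (proj2_sig (rho i)) => m [t Ht]; exists m, t.
move=> m0 Hm0.
pose Pt i t := ground_over (tfun (Tn m0)) t /\ eval rho0 t = proj1_sig (rho i).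
pose s i := if (i != k) && (i \in fv_form g) then epsilon (inhabits (Var 0)) (Pt i) else Var i.
have Hspec : forall i, (i != k) && (i \in fv_form g) -> Pt i (s i).
  move=> i H; rewrite /s H; apply: epsilon_spec.
  by case/andP: H => _ /Hm0 [t Ht]; exists t.
have Hsi : forall i, s i = Var i \/ ground_over (tfun (Tn m0)) (s i).
  move=> i; case H: ((i != k) && (i \in fv_form g)); last by left; rewrite /s H.
  by right; case: (Hspec i H).
have Hsk : s k = Var k by rewrite /s eqxx.
pose phi := fsubst s g.
have Hmin : size (undup (fv_form phi)) <= 1.
  apply: (@size_undup_le1 _ k) => x /fv_fsubst [j Hj Hx].
  case H: ((j != k) && (j \in fv_form g)).
    by case: (Hspec j H) => -[E _] _; rewrite E in Hx.
  move: H; rewrite Hj andbT => /negbFE /eqP Ejk; subst j.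
  by move: Hx; rewrite Hsk inE => /eqP.
have Hax : tax (Tn m0.+1) (sk true (Ix phi k)).
  right; exists (Ix phi k); split=> //; exists phi, k; split=> //; split=> //.
  by exists g, s.
have Hgood := tax_good Hax.
have HMk := HM (ex_intro _ m0.+1 Hax).
apply/(@ib_subst N rho rho s g k Hsk).
  move=> d i Hik; case H: ((i != k) && (i \in fv_form g)).
    case: (Hspec i H) => -[Gt Ot] Et; apply: sig_eq.
    rewrite (@eval_transfer _ _ (fun j => proj1_sig (upd rho k d j))) //.
      by rewrite (eval_closed _ rho0 Gt) Et.
    by apply: term_over_mono Ot => f Hf; exists m0.
  by move: H; rewrite /s Hik /= => ->; rewrite /= /upd (negbTE Hik).
case: (Ix_eq phi k) Hgood HMk => nn' ->.
rewrite /sk fsize_closeAll skf_closeAll => /closeAll_over_inv Hg /closeAll_elim HMk.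
exact: key (leqnn _) Hg HMk.
Qed.
End Back.

Theorem proposition14 (L : lang) (T G : form -> Prop) :
  skolem_free L ->
  lfun L zero -> lfun L succ ->
  (forall A, T A -> form_over L A /\ sentence A) ->
  (forall A, G A -> form_over L A) ->
  (inconsistent (GSIomega G (skT L T)) <->
   inconsistent (fun A => T A \/ IND G A)).
Proof.
move=> HL Hz Hs HT HG; split=> H Hc; apply: H.
  exact: forward HL Hz Hs HT HG Hc.
case: Hc => M HM; exact: (@backward L T G Hz Hs HT HG M HM).
Qed.
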